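(* Let $\psi\in C^1((0,\infty))$, $d>0$, and let $G=(V,E)$ be a finite graph satisfying $CD\psi(d,0)$. Let $u$ be a positive solution to the heat equation on $G$. Then for all $x\in V$ and $t>0$, \[ -\Delta^\psi u(x,t)\le\frac{d}{2t}. \]
   Context: A finite graph $G=(V,E)$: finite set $V$, irreflexive symmetric relation $E$; $v\sim w$ iff $(v,w)\in E$. $C^+(V)$: positive functions on $V$. Laplacian $\Delta f(v)=\sum_{w\sim v}(f(w)-f(v))$. For $f\in C^+(V)$: $(\Delta^\psi f)(v):=\Delta\big[\psi\big(\tfrac{f}{f(v)}\big)\big](v)$; $(\Omega^\psi f)(v):=\Delta\Big[\psi'\big(\tfrac{f}{f(v)}\big)\cdot\tfrac{f}{f(v)}\cdot\big(\tfrac{\Delta f}{f}-\tfrac{(\Delta f)(v)}{f(v)}\big)\Big](v)$; $2\Gamma_2^\psi(f):=\Omega^\psi f+\frac{\Delta f\,\Delta^\psi f}{f}-\frac{\Delta(f\,\Delta^\psi f)}{f}$. $G$ satisfies $CD\psi(d,0)$ if $\Gamma_2^\psi(f)\ge\frac1d(\Delta^\psi f)^2$ for all $f\in C^+(V)$. A solution to the heat equation on $G$ is $u:V\times[0,\infty)\to\mathbb{R}$, continuously differentiable in $t$, with $\Delta u-\partial_t u=0$; $\Delta^\psi u(x,t)$ means $(\Delta^\psi u(\cdot,t))(x)$. *)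

(* Defs.v *)
From Stdlib Require Import Reals Lra List.
Import ListNotations.
Open Scope R_scope.

Definition finite_graph {V : Type} (vs : list V) (adj : V -> V -> bool) : Prop :=
  NoDup vs /\ (forall v, In v vs) /\
  (forall v, adj v v = false) /\ (forall v w, adj v w = adj w v).

Definition lap {V : Type} (vs : list V) (adj : V -> V -> bool)
  (f : V -> R) (v : V) : R :=
  fold_right Rplus 0 (map (fun w => f w - f v) (filter (adj v) vs)).

Definition lap_psi {V : Type} (vs : list V) (adj : V -> V -> bool)
  (psi : R -> R) (f : V -> R) (v : V) : R :=
  lap vs adj (fun w => psi (f w / f v)) v.

Definition Omega_psi {V : Type} (vs : list V) (adj : V -> V -> bool)
  (dpsi : R -> R) (f : V -> R) (v : V) : R :=
  lap vs adj (fun w => dpsi (f w / f v) * (f w / f v) *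
                        (lap vs adj f w / f w - lap vs adj f v / f v)) v.

(* Γ_2^ψ(f), defined via 2Γ_2^ψ(f) = Ω^ψ f + Δf Δ^ψ f / f - Δ(f Δ^ψ f)/f *)
Definition Gamma2_psi {V : Type} (vs : list V) (adj : V -> V -> bool)
  (psi dpsi : R -> R) (f : V -> R) (v : V) : R :=
  (Omega_psi vs adj dpsi f v
   + lap vs adj f v * lap_psi vs adj psi f v / f v
   - lap vs adj (fun w => f w * lap_psi vs adj psi f w) v / f v) / 2.

Definition CD_psi {V : Type} (vs : list V) (adj : V -> V -> bool)
  (psi dpsi : R -> R) (d : R) : Prop :=
  forall f : V -> R, (forall v, 0 < f v) ->
    forall v, Gamma2_psi vs adj psi dpsi f v >= / d * (lap_psi vs adj psi f v) ^ 2.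

Definition C1_pos (psi dpsi : R -> R) : Prop :=
  forall x, 0 < x -> derivable_pt_lim psi x (dpsi x) /\ continuity_pt dpsi x.

Definition deriv_nonneg (g : R -> R) (t l : R) : Prop :=
  forall eps, 0 < eps -> exists del, 0 < del /\
    forall h, h <> 0 -> Rabs h < del -> 0 <= t + h ->
      Rabs ((g (t + h) - g t) / h - l) < eps.

Definition cont_nonneg (g : R -> R) (t : R) : Prop :=
  forall eps, 0 < eps -> exists del, 0 < del /\
    forall s, 0 <= s -> Rabs (s - t) < del -> Rabs (g s - g t) < eps.

Definition heat_solution {V : Type} (vs : list V) (adj : V -> V -> bool)
  (u ut : V -> R -> R) : Prop :=
  forall x t, 0 <= t ->
    deriv_nonneg (u x) t (ut x t) /\ cont_nonneg (ut x) t /\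
    lap vs adj (fun y => u y t) x - ut x t = 0.

(* Main.v *)
Require Import Defs.
From Stdlib Require Import Reals List Lra.
Open Scope R_scope.

Lemma deriv_u (f : R -> R) l s : 0 < s -> deriv_nonneg f s l -> derivable_pt_lim f s l.
Proof.
  intros Hs H eps He. destruct (H eps He) as [del [Hd Hp]].
  exists (mkposreal (Rmin del s) (Rmin_pos _ _ Hd Hs)). intros h Hh Hab. simpl in Hab.
  apply Hp; auto.
  - eapply Rlt_le_trans; [exact Hab| apply Rmin_l].
  - assert (Rabs h < s) by (eapply Rlt_le_trans; [exact Hab|apply Rmin_r]).
    destruct (Rabs_def2 _ _ H0). lra.
Qed.

Lemma deriv_sum {V : Type} (g : V -> R -> R) (g' : V -> R) (l : list V) s :
  (forall w, In w l -> derivable_pt_lim (g w) s (g' w)) ->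
  derivable_pt_lim (fun r => fold_right Rplus 0 (map (fun w => g w r) l)) s
    (fold_right Rplus 0 (map g' l)).
Proof.
  induction l as [|a l IH]; intros H; simpl.
  - apply derivable_pt_lim_const.
  - exact (derivable_pt_lim_plus (g a) _ s _ _ (H a (or_introl eq_refl))
             (IH (fun w Hw => H w (or_intror Hw)))).
Qed.

Lemma fold_le {V : Type} (a b : V -> R) (l : list V) :
  (forall w, In w l -> a w <= b w) ->
  fold_right Rplus 0 (map a l) <= fold_right Rplus 0 (map b l).
Proof.
  induction l as [|x l IH]; intros H; simpl. lra.
  assert (a x <= b x) by (apply H; left; auto).
  assert (fold_right Rplus 0 (map a l) <= fold_right Rplus 0 (map b l))
    by (apply IH; intros; apply H; right; auto). lra.
Qed.

Lemma fold_scal {V : Type} (a : V -> R) c (l : list V) :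
  fold_right Rplus 0 (map (fun w => c * a w) l) = c * fold_right Rplus 0 (map a l).
Proof. induction l as [|x l IH]; simpl. ring. rewrite IH. ring. Qed.

Lemma fold_ext {V : Type} (a b : V -> R) (l : list V) :
  (forall w, a w = b w) ->
  fold_right Rplus 0 (map a l) = fold_right Rplus 0 (map b l).
Proof. intros H. induction l as [|x l IH]; simpl; auto. rewrite IH, H. auto. Qed.

Lemma left_max (f : R -> R) s l d0 : 0 < d0 -> derivable_pt_lim f s l ->
  (forall h, - d0 < h < 0 -> f (s + h) <= f s) -> 0 <= l.
Proof.
  intros Hd0 Hd Hm. destruct (Rle_or_lt 0 l) as [|Hl]; auto. exfalso.
  destruct (Hd (- l) ltac:(lra)) as [del Hdel].
  pose (h := - Rmin del d0 / 2).
  assert (Hmin : 0 < Rmin del d0) by (apply Rmin_pos; [apply cond_pos|lra]).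
  assert (Hh : h <> 0) by (unfold h; lra).
  assert (Ha : Rabs h < del).
  { rewrite Rabs_left by (unfold h; lra). unfold h. pose proof (Rmin_l del d0). lra. }
  specialize (Hdel h Hh Ha).
  assert (Hr : - d0 < h < 0) by (unfold h; pose proof (Rmin_r del d0); lra).
  specialize (Hm h Hr).
  assert (0 <= (f (s + h) - f s) / h).
  { unfold Rdiv. replace ((f (s + h) - f s) * / h) with ((f s - f (s+h)) * / (- h))
      by (field; auto).
    apply Rmult_le_pos. lra. left; apply Rinv_0_lt_compat; lra. }
  destruct (Rabs_def2 _ _ Hdel). lra.
Qed.

Lemma list_max {V : Type} (G : V -> R -> R) a b :
  (forall y, exists s, a <= s <= b /\ forall r, a <= r <= b -> G y r <= G y s) ->
  forall y0 l, exists y s, a <= s <= b /\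
    forall z, In z (y0 :: l) -> forall r, a <= r <= b -> G z r <= G y s.
Proof.
  intros H y0 l. induction l as [|z l IH].
  - destruct (H y0) as [s [Hs Hm]]. exists y0, s. split; auto.
    intros z [<-|[]]; auto.
  - destruct IH as [y [s [Hs Hm]]]. destruct (H z) as [s' [Hs' Hm']].
    destruct (Rle_or_lt (G z s') (G y s)).
    + exists y, s. split; auto. intros w [<-|[<-|Hw]] r Hr.
      * apply Hm; [left|]; auto.
      * eapply Rle_trans; [apply Hm'|]; auto.
      * apply Hm; [right|]; auto.
    + exists z, s'. split; auto. intros w [<-|[<-|Hw]] r Hr.
      * eapply Rle_trans; [apply Hm; [left|]; eauto|]. lra.
      * apply Hm'; auto.
      * eapply Rle_trans; [apply Hm; [right|]; eauto|]. lra.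
Qed.

Lemma deriv_term (V : Type) (psi dpsi : R -> R) (u ut : V -> R -> R) w x s :
  C1_pos psi dpsi -> 0 < s ->
  (forall y, derivable_pt_lim (u y) s (ut y s)) ->
  (forall y, 0 < u y s) ->
  derivable_pt_lim (fun r => psi (u w r / u x r)) s
    (dpsi (u w s / u x s) * ((ut w s * u x s - ut x s * u w s) / (u x s)²)).
Proof.
  intros HC Hs Hd Hp.
  assert (Hq := derivable_pt_lim_div (u w) (u x) s _ _ (Hd w) (Hd x)
                  ltac:(specialize (Hp x); lra)).
  assert (Hps : derivable_pt_lim psi ((u w / u x)%F s) (dpsi (u w s / u x s))).
  { apply HC. unfold div_fct. apply Rdiv_lt_0_compat; auto. }
  exact (derivable_pt_lim_comp _ psi s _ _ Hq Hps).
Qed.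

Lemma deriv_H (V : Type) (vs : list V) (adj : V -> V -> bool)
  (psi dpsi : R -> R) (u ut : V -> R -> R) x s :
  C1_pos psi dpsi -> heat_solution vs adj u ut ->
  (forall x t, 0 <= t -> 0 < u x t) -> 0 < s ->
  derivable_pt_lim (fun r => lap_psi vs adj psi (fun y => u y r) x) s
     (Omega_psi vs adj dpsi (fun y => u y s) x).
Proof.
  intros HC Hh Hp Hs.
  assert (Hd : forall y, derivable_pt_lim (u y) s (ut y s)).
  { intro y. apply deriv_u; auto. apply (Hh y s). lra. }
  assert (Hp' : forall y, 0 < u y s) by (intro; apply Hp; lra).
  unfold lap_psi, Omega_psi, lap.
  set (T := fun w => dpsi (u w s / u x s) * ((ut w s * u x s - ut x s * u w s) / (u x s)²)).
  assert (E : forall w, T w - T x =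
     dpsi (u w s / u x s) * (u w s / u x s) *
       (lap vs adj (fun y => u y s) w / u w s - lap vs adj (fun y => u y s) x / u x s) -
     dpsi (u x s / u x s) * (u x s / u x s) *
       (lap vs adj (fun y => u y s) x / u x s - lap vs adj (fun y => u y s) x / u x s)).
  { intro w. unfold T.
    assert (Lw : lap vs adj (fun y => u y s) w = ut w s) by
      (destruct (Hh w s ltac:(lra)) as [_ [_ H]]; lra).
    assert (Lx : lap vs adj (fun y => u y s) x = ut x s) by
      (destruct (Hh x s ltac:(lra)) as [_ [_ H]]; lra).
    rewrite Lw, Lx. unfold Rsqr. pose proof (Hp' w). pose proof (Hp' x).
    field. lra. }
  rewrite <- (fold_ext _ _ _ E).
  apply (deriv_sum (fun w r => psi (u w r / u x r) - psi (u x r / u x r))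
                   (fun w => T w - T x)).
  intros w _.
  apply (derivable_pt_lim_minus (fun r => psi (u w r / u x r)) (fun r => psi (u x r / u x r)));
   unfold T; apply deriv_term; auto.
Qed.

Lemma key (V : Type) (vs : list V) (adj : V -> V -> bool)
  (psi dpsi : R -> R) (d : R) (u ut : V -> R -> R) :
  finite_graph vs adj ->
  C1_pos psi dpsi ->
  0 < d ->
  CD_psi vs adj psi dpsi d ->
  heat_solution vs adj u ut ->
  (forall x t, 0 <= t -> 0 < u x t) ->
  forall eps T, 0 < eps <= T -> forall x,
    (T - eps) * (- lap_psi vs adj psi (fun y => u y T) x) <= d / 2.
Proof.
  intros Hg HC Hd HCD Hh Hp eps T HeT x.
  set (H := fun y r => lap_psi vs adj psi (fun z => u z r) y).
  set (G := fun y r => (r - eps) * (- H y r)).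
  assert (DG : forall y r, 0 < r -> derivable_pt_lim (G y) r
     (1 * (- H y r) + (r - eps) * (- Omega_psi vs adj dpsi (fun z => u z r) y))).
  { intros y r Hr. unfold G.
    apply (derivable_pt_lim_mult (fun r => r - eps) (fun r => - H y r)).
    - assert (A := derivable_pt_lim_minus id (fun _ => eps) r 1 0
        (derivable_pt_lim_id r) (derivable_pt_lim_const eps r)).
      replace (1 - 0) with 1 in A by ring. exact A.
    - apply (derivable_pt_lim_opp (H y)). apply (deriv_H V vs adj psi dpsi u ut); auto. }
  assert (Hmax : forall y, exists s, eps <= s <= T /\ forall r, eps <= r <= T -> G y r <= G y s).
  { intro y. destruct (continuity_ab_maj (G y) eps T ltac:(lra)) as [M [HM HM']].
    - intros c Hc. apply derivable_continuous_pt. exists (1 * (- H y c) + (c - eps) *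
        (- Omega_psi vs adj dpsi (fun z => u z c) y)). apply DG. lra.
    - exists M. split; auto. }
  destruct (list_max G eps T Hmax x vs) as [ys [s [Hs Hm]]].
  assert (HinV : forall z, In z (x :: vs)) by (intro z; right; apply Hg).
  assert (Goal : G ys s <= d / 2).
  2:{ eapply Rle_trans; [apply (Hm x (or_introl eq_refl) T); lra|exact Goal]. }
  set (P := - H ys s).
  destruct (Rle_or_lt P 0) as [HP|HP].
  { unfold G. fold P. assert (0 <= s - eps) by lra. nra. }
  destruct (Req_dec s eps) as [Hse|Hse].
  { unfold G. rewrite Hse. lra. }
  assert (Hs' : eps < s) by lra.
  assert (Hsp : forall z, H ys s <= H z s).
  { intro z. pose proof (Hm z (HinV z) s Hs) as Hz. unfold G in Hz.
    apply Rmult_le_reg_l with (s - eps). lra. lra. }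
  assert (Ht : 0 <= 1 * (- H ys s) + (s - eps) * (- Omega_psi vs adj dpsi (fun z => u z s) ys)).
  { apply (left_max (G ys) s _ (s - eps)). lra. apply DG. lra.
    intros h Hh'. apply Hm. apply HinV. lra. }
  set (us := fun z => u z s).
  assert (Hus : forall z, 0 < us z) by (intro; apply Hp; lra).
  pose proof (HCD us Hus ys) as Hc.
  unfold Gamma2_psi in Hc.
  fold (H ys s) in Hc.
  set (Om := Omega_psi vs adj dpsi us ys) in *.
  assert (Hb : lap vs adj (fun w => us w * lap_psi vs adj psi us w) ys >=
               H ys s * lap vs adj us ys).
  { unfold lap. rewrite <- fold_scal. apply Rle_ge. apply fold_le. intros w _.
    pose proof (Hsp w). pose proof (Hus w). change (H w s) with (lap_psi vs adj psi us w) in *. change (H ys s) with (lap_psi vs adj psi us ys) in *.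
    nra. }
  assert (Hq : lap vs adj us ys * H ys s / us ys -
               lap vs adj (fun w => us w * lap_psi vs adj psi us w) ys / us ys <= 0).
  { unfold Rdiv. rewrite <- Rmult_minus_distr_r. pose proof (Hus ys).
    assert (0 < / us ys) by (apply Rinv_0_lt_compat; auto). nra. }
  try fold Om in Ht.
  assert (HH : lap_psi vs adj psi us ys = H ys s) by reflexivity.
  rewrite HH in Hc.
  assert (Hk : / d * d = 1) by (field; lra).
  assert (Hk0 : 0 < / d) by (apply Rinv_0_lt_compat; lra).
  unfold G. fold P. fold P in Hc, Ht, Hq.
  assert (H2 : 2 * / d * P * P <= Om).
  { replace (H ys s) with (- P) in * by (unfold P; ring). nra. }
  assert (H3 : (s - eps) * (2 * / d * P * P) <= P).
  { eapply Rle_trans. apply Rmult_le_compat_l. lra. exact H2.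
    change (Omega_psi vs adj dpsi (fun z => u z s) ys) with Om in Ht. lra. }
  assert (H4 : (s - eps) * (2 * / d * P) <= 1).
  { apply Rmult_le_reg_r with P; auto. nra. }
  assert (H5 : (s - eps) * P * (2 * / d) * d <= d) by nra.
  replace ((s - eps) * P * (2 * / d) * d) with (2 * ((s - eps) * P)) in H5
    by (field; lra). lra.
Qed.

Theorem mainTheorem7 (V : Type) (vs : list V) (adj : V -> V -> bool)
  (psi dpsi : R -> R) (d : R) (u ut : V -> R -> R) :
  finite_graph vs adj ->
  C1_pos psi dpsi ->
  0 < d ->
  CD_psi vs adj psi dpsi d ->
  heat_solution vs adj u ut ->
  (forall x t, 0 <= t -> 0 < u x t) ->
  forall x t, 0 < t -> - lap_psi vs adj psi (fun y => u y t) x <= d / (2 * t).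
Proof.
  intros Hg HC Hd HCD Hh Hp x t Ht.
  set (A := - lap_psi vs adj psi (fun y => u y t) x).
  destruct (Rle_or_lt A (d / (2 * t))) as [|HA]; auto. exfalso.
  assert (Hd2 : 0 < d / (2 * t)) by (apply Rdiv_lt_0_compat; lra).
  assert (HA0 : 0 < A) by lra.
  set (a := d / (2 * A)).
  assert (Ha0 : 0 < a) by (apply Rdiv_lt_0_compat; lra).
  assert (Hat : a < t).
  { unfold a. apply Rmult_lt_reg_r with (2 * A). lra.
    replace (d / (2 * A) * (2 * A)) with d by (field; lra).
    apply Rmult_lt_reg_r with (/ (2 * t)). apply Rinv_0_lt_compat; lra.
    replace (t * (2 * A) * / (2 * t)) with A by (field; lra). exact HA. }
  pose (eps := t - (a + t) / 2).
  pose proof (key V vs adj psi dpsi d u ut Hg HC Hd HCD Hh Hp eps t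
                 ltac:(unfold eps; lra) x) as K.
  fold A in K.
  replace (t - eps) with ((a + t) / 2) in K by (unfold eps; ring).
  assert (a * A = d / 2) by (unfold a; field; lra).
  nra.
Qed.
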